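(* For every graph $\mathcal{G}=(\mathcal{V},\mathcal{E})$ with $|\mathcal{V}|\ge4$ and no isolated vertices, the graph device $D(\mathcal{G})$ is minimal.
   Context: An abstract storage device (ASD) is a pair $D=(\mathcal{S}_D,\mathcal{P}_D)$, $\mathcal{S}_D$ a finite set and $\mathcal{P}_D$ a finite family of partitions of $\mathcal{S}_D$. For a partition $\pi$ of $\mathcal{S}'$ and $\phi:\mathcal{S}\to\mathcal{S}'$, $\pi\circ\phi$ is the partition of $\mathcal{S}$ with $x,y$ in the same block iff $\phi(x),\phi(y)$ are in the same block of $\pi$; $\pi\preceq\rho$ means every block of $\pi$ lies in a block of $\rho$. $D\le D'$ means there exist $\phi:\mathcal{S}_D\to\mathcal{S}_{D'}$, $\alpha:\mathcal{P}_D\to\mathcal{P}_{D'}$ with $\alpha(\pi)\circ\phi\preceq\pi$ for all $\pi\in\mathcal{P}_D$; $D\equiv D'$ means $D\le D'$ and $D'\le D$. $D$ is minimal if no $E\equiv D$ has $|\mathcal{S}_E|<|\mathcal{S}_D|$ and no $E\equiv D$ has $|\mathcal{P}_E|<|\mathcal{P}_D|$. For a finite undirected graph $\mathcal{G}=(\mathcal{V},\mathcal{E})$, the graph device $D(\mathcal{G})$ has state space $\mathcal{V}$ and partition set $\{\pi_e:e\in\mathcal{E}\}$, where for $e=\{u,v\}$, $\pi_e=\{\{u\},\{v\},\mathcal{V}\setminus\{u,v\}\}$. A vertex is isolated if it lies in no edge. *)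

(* Defs.v *)
From mathcomp Require Import all_boot.
Set Implicit Arguments. Unset Strict Implicit. Unset Printing Implicit Defensive.

(* An abstract storage device: a finite state space (a finType) together with
   a finite family (a set) of partitions of it. *)
Record asd := ASD { st : finType; parts : {set {set {set st}}} }.

Definition asd_ok (D : asd) : Prop :=
  forall p, p \in parts D -> partition p [set: st D].

Definition same_block (T : finType) (P : {set {set T}}) (x y : T) : bool :=
  [exists B in P, (x \in B) && (y \in B)].

Definition comp_part (S S' : finType) (P : {set {set S'}}) (phi : S -> S')
  : {set {set S}} :=
  [set [set y | same_block P (phi x) (phi y)] | x : S].

Definition refines (T : finType) (P Q : {set {set T}}) : bool :=
  [forall B in P, [exists C in Q, B \subset C]].

Definition asd_le (D D' : asd) : Prop :=
  exists (phi : st D -> st D') (alpha : {set {set st D}} -> {set {set st D'}}),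
    forall p, p \in parts D ->
      alpha p \in parts D' /\ refines (comp_part (alpha p) phi) p.

Definition asd_equiv (D D' : asd) : Prop := asd_le D D' /\ asd_le D' D.

Definition asd_minimal (D : asd) : Prop :=
  forall E : asd, asd_ok E -> asd_equiv E D ->
    #|st D| <= #|st E| /\ #|parts D| <= #|parts E|.

Definition simple_graph (V : finType) (g : rel V) : Prop :=
  symmetric g /\ irreflexive g.

Definition no_isolated (V : finType) (g : rel V) : Prop :=
  forall v : V, exists u : V, g u v.

Definition pi_edge (V : finType) (u v : V) : {set {set V}} :=
  [set [set u]; [set v]; [set: V] :\ u :\ v].

Definition graph_device (V : finType) (g : rel V) : asd :=
  @ASD V [set pi_edge e.1 e.2 | e in [set e : V * V | g e.1 e.2]].

(* Main.v *)
Require Import Defs.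
From mathcomp Require Import all_boot.

Lemma sb_pi (V : finType) (a b x y : V) : a != b ->
  same_block (pi_edge a b) x y = ((x == a) == (y == a)) && ((x == b) == (y == b)).
Proof.
move=> ab; apply/idP/idP.
  case/existsP => B /andP[]; rewrite /pi_edge !inE => /orP[/orP[]|] /eqP-> /andP[];
  rewrite !inE.
  - by move=> /eqP-> /eqP->; rewrite !eqxx.
  - by move=> /eqP-> /eqP->; rewrite !eqxx.
  - by case/and3P=> /negbTE-> /negbTE-> _ /and3P[/negbTE-> /negbTE-> _].
move=> H; apply/existsP.
have [xa|xa] := eqVneq x a.
  exists [set a]; rewrite /pi_edge !inE eqxx /=.
  by move: H; rewrite xa eqxx /= => /andP[/eqP/esym/eqP ->].
have [xb|xb] := eqVneq x b.
  exists [set b]; rewrite /pi_edge !inE eqxx orbT /=.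
  by move: H; rewrite xb eqxx /= => /andP[_ /eqP/esym/eqP ->].
exists ([set: V] :\ a :\ b); rewrite /pi_edge !inE eqxx !orbT /=.
by move: H; rewrite (negbTE xa) (negbTE xb) /= => /andP[/eqP/esym-> /eqP/esym->].
Qed.

Lemma R1 (S S' : finType) (Q : {set {set S'}}) (f : S -> S') (P : {set {set S}}) x y :
  refines (comp_part Q f) P -> same_block Q (f x) (f x) -> same_block Q (f x) (f y) ->
  same_block P x y.
Proof.
move=> /forallP/(_ [set z | same_block Q (f x) (f z)]) /implyP.
rewrite /comp_part imset_f // => /(_ isT) /existsP[C /andP[CP sub]] Hx Hy.
apply/existsP; exists C; rewrite CP (subsetP sub x) ?inE // (subsetP sub y) ?inE //.
Qed.

Lemma pi_sym (V : finType) (a b : V) : pi_edge a b = pi_edge b a.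
Proof.
rewrite /pi_edge.
have -> : [set: V] :\ a :\ b = [set: V] :\ b :\ a by apply/setP=> z; rewrite !inE andbCA.
by apply/setP=> B; rewrite !inE; case: (B == [set a]); case: (B == [set b]); rewrite ?orbT.
Qed.

Lemma pig (p1 p2 p3 p4 : bool * bool) :
  ~~ (p1.1 && p1.2) -> ~~ (p2.1 && p2.2) -> ~~ (p3.1 && p3.2) -> ~~ (p4.1 && p4.2) ->
  p1 != p2 -> p1 != p3 -> p1 != p4 -> p2 != p3 -> p2 != p4 -> p3 != p4 -> False.
Proof. by case: p1 p2 p3 p4 => [[][]] [[][]] [[][]] [[][]]. Qed.

Lemma sep (V : finType) (a b c d x y : V) : a != b -> c != d ->
  same_block (pi_edge a b) x y -> same_block (pi_edge c d) x y ->
  (x \in [:: a; b; c; d]) -> x = y.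
Proof.
move=> ab cd; rewrite !sb_pi // => /andP[/eqP e1 /eqP e2] /andP[/eqP e3 /eqP e4].
rewrite !inE => /or4P[]/eqP xe.
- by move: e1; rewrite xe eqxx => /esym/eqP.
- by move: e2; rewrite xe eqxx => /esym/eqP.
- by move: e3; rewrite xe eqxx => /esym/eqP.
- by move: e4; rewrite xe eqxx => /esym/eqP.
Qed.

Theorem lemma2 (V : finType) (g : rel V) :
  simple_graph g -> 4 <= #|V| -> no_isolated g ->
  asd_minimal (graph_device g).
Proof.
move=> [gsym girr] h4 noiso E okE [[psi [beta Hbe]] [phi [alpha Hal]]].
have partsD : forall P, P \in parts (graph_device g) ->
    exists a b, g a b /\ P = pi_edge a b.
  by move=> P /imsetP[[a b]]; rewrite inE /= => gab ->; exists a, b.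
have neq : forall a b, g a b -> a != b.
  by move=> a b gab; apply/eqP=> e; move: gab; rewrite e girr.
have reflD : forall P z, P \in parts (graph_device g) -> same_block P z z.
  by move=> P z /partsD[a [b [gab ->]]]; rewrite sb_pi ?neq // !eqxx.
have reflE : forall q s, q \in parts E -> same_block q s s.
  move=> q s qE; have [bq rq] := Hbe q qE; exact: R1 rq (reflD _ _ bq) (reflD _ _ bq).
have chain : forall p x y, p \in parts (graph_device g) ->
    same_block (alpha p) (phi x) (phi y) -> same_block p x y.
  move=> p x y pD H; have [aE ra] := Hal p pD; exact: R1 ra (reflE _ _ aE) H.
split.
  have inj : injective phi.
    move=> u w e; apply/eqP; apply: contraT => uw.
    have [x gxu] := noiso u.
    have pD : pi_edge x u \in parts (graph_device g).
      by apply/imsetP; exists (x, u); rewrite ?inE.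
    have := chain _ u w pD; rewrite e reflE ?(proj1 (Hal _ pD)) // => /(_ isT).
    rewrite sb_pi ?neq // eqxx => /andP[_ /eqP].
    by rewrite eq_sym (negbTE uw).
  have := max_card (phi @: [set: V]); rewrite card_imset // cardsT //.
have inj : {in parts (graph_device g) &, injective alpha}.
  move=> p1 p2 p1D p2D eqa; apply/eqP; apply: contraT => ne.
  have [a [b [gab E1]]] := partsD _ p1D; have [c [d [gcd E2]]] := partsD _ p2D.
  have qE := proj1 (Hal _ p1D).
  have [bqD rb] := Hbe _ qE.
  have [e [f [gef Eb]]] := partsD _ bqD.
  pose F z := (psi (phi z) == e, psi (phi z) == f).
  have key : forall x y, F x = F y -> same_block p1 x y /\ same_block p2 x y.
    move=> x y [h1 h2].
    have sq : same_block (alpha p1) (phi x) (phi y).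
      apply: R1 rb (reflD _ _ bqD) _; rewrite Eb sb_pi ?neq // h1 h2 !eqxx //.
    split; first exact: chain.
    by apply: chain => //; rewrite -eqa.
  have injF : forall x y, x \in [:: a; b; c; d] -> F x = F y -> x = y.
    move=> x y xl /key [s1 s2]; rewrite E1 in s1; rewrite E2 in s2.
    exact: (@sep _ a b c d x y (neq _ _ gab) (neq _ _ gcd) s1 s2 xl).
  have dF : forall x y, x \in [:: a; b; c; d] -> x != y -> F x != F y.
    by move=> x y xl; apply: contra => /eqP/(injF _ _ xl)->.
  have nTT : forall z, ~~ ((F z).1 && (F z).2).
    move=> z; apply/negP => /andP[/eqP h1 /eqP h2]; move: (neq _ _ gef).
    by rewrite -h1 -h2 eqxx.
  have [x0 [x0cd x0a x0b]] : exists x0, [/\ x0 \in [:: c; d], x0 != a & x0 != b].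
    case: (boolP (c \in [:: a; b])) => ca.
      case: (boolP (d \in [:: a; b])) => da.
        exfalso; move: ne; rewrite E1 E2.
        move: ca da (neq _ _ gcd); rewrite !inE => /orP[]/eqP-> /orP[]/eqP->;
          rewrite ?eqxx // => _; by move=> /eqP; apply; rewrite // pi_sym.
      by exists d; move: da; rewrite !inE negb_or eqxx orbT => /andP[-> ->].
    by exists c; move: ca; rewrite !inE negb_or eqxx => /andP[-> ->].
  have [w wn] : exists w, w \notin [:: a; b; x0].
    case: (pickP (fun w => w \notin [:: a; b; x0])) => [w wn|H]; first by exists w.
    exfalso; have : #|[set: V]| <= 3.
      apply: leq_trans (card_size [:: a; b; x0]); apply: subset_leq_card.
      by apply/subsetP => z _; have := H z; rewrite /= => /negbFE.
    by rewrite cardsT => /(leq_trans h4).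
  move: wn; rewrite !inE !negb_or => /and3P[wa wb wx].
  have al : a \in [:: a; b; c; d] by rewrite !inE eqxx.
  have bl : b \in [:: a; b; c; d] by rewrite !inE eqxx orbT.
  have xl : x0 \in [:: a; b; c; d] by move: x0cd; rewrite !inE => /orP[]->; rewrite !orbT.
  exfalso; apply: (pig (F a) (F b) (F x0) (F w) (nTT a) (nTT b) (nTT x0) (nTT w)).
  - exact: dF (neq _ _ gab).
  - by apply: dF; rewrite // eq_sym.
  - by apply: dF; rewrite // eq_sym.
  - by apply: dF; rewrite // eq_sym.
  - by apply: dF; rewrite // eq_sym.
  - by apply: dF; rewrite // eq_sym.
rewrite -(card_in_imset inj); apply: subset_leq_card.
by apply/subsetP => q /imsetP[p pD ->]; exact: (proj1 (Hal _ pD)).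
Qed.
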